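(* Let $n,m,p\in\mathbb{N}$ with $m\ge p$, $A\in\mathbb{R}^{n\times n}$, $B\in\mathbb{R}^{n\times m}$, $C\in\mathbb{R}^{p\times n}$, and let $f:\mathbb{R}\times\mathbb{R}^n\times\mathbb{R}^m\to\mathbb{R}^n$ be continuous and bounded. Assume: (P1) $L\in\mathcal{C}^\infty(\mathbb{R}\to\mathbb{R}^{m\times m})$ is such that $L,\dot L,\ldots,L^{(n)}$ are bounded and there is $q\in\mathbb{N}$ with $\operatorname{rk} BL(t)=q\ge p$ for all $t\in\mathbb{R}$; (P2) there is $r\in\mathbb{N}$ such that $CA^kBL(t)=0$ for all $t\in\mathbb{R}$ and $CA^kf(t,x,u)=0$ for all $(t,x,u)$, for $k=0,\ldots,r-2$, and $\Gamma:=CA^{r-1}B$ satisfies $\operatorname{rk}\Gamma L(t)=p$ for all $t\in\mathbb{R}$. Let $\mathcal{B}(t)$, $\mathcal{C}$ and $U(t)$ be as in the context. If there exists $\alpha>0$ such that $$\det\Big(\mathcal{C}\mathcal{B}(t)\big(\mathcal{C}\mathcal{B}(t)\big)^\top\Big)\ge\alpha\quad\text{for all }t\in\mathbb{R},$$ then $U$ is a Lyapunov transformation. The converse implication is false in general: there exist data $(A,B,C,f,L)$ satisfying (P1) and (P2) for which $U$ is a Lyapunov transformation but no such $\alpha>0$ exists.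
   Context: $M^\dagger$ denotes the Moore–Penrose pseudoinverse. For a matrix function $M$, $(\tfrac{d}{dt}-A)(M(t)):=\dot M(t)-AM(t)$, applied iteratively for powers. Define $\mathcal{B}(t):=\big[BL(t),(\tfrac{d}{dt}-A)(BL(t)),\ldots,(\tfrac{d}{dt}-A)^{r-1}(BL(t))\big]\in\mathbb{R}^{n\times rm}$; $\mathcal{C}:=[C^\top,(CA)^\top,\ldots,(CA^{r-1})^\top]^\top\in\mathbb{R}^{rp\times n}$; $\rho:=\operatorname{rk}\mathcal{C}$; $V\in\mathbb{R}^{n\times(n-\rho)}$ with $\operatorname{im}V=\ker\mathcal{C}$; $\mathcal{N}(t):=V^\dagger[I_n-\mathcal{B}(t)(\mathcal{C}\mathcal{B}(t))^\dagger\mathcal{C}]$; $U(t):=\begin{bmatrix}\mathcal{C}\\ \mathcal{N}(t)\end{bmatrix}$ (under (P1),(P2) this is a square invertible matrix). A map $M\in\mathcal{C}^1(\mathbb{R}\to\mathbf{Gl}_n(\mathbb{R}))$ is called a Lyapunov transformation if $M$, $M^{-1}$ and $\dot M$ are bounded on $\mathbb{R}$. *)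

(* Defs.v *)
From HB Require Import structures.
From mathcomp Require Import all_boot all_order all_algebra.
From mathcomp Require Import all_classical all_reals all_analysis.
Set Implicit Arguments. Unset Strict Implicit. Unset Printing Implicit Defensive.
Import Order.TTheory GRing.Theory Num.Theory.
Import numFieldNormedType.Exports.
Local Open Scope ring_scope.

Section Defs.
Variable R : realType.

Definition is_pinv (a b : nat) (M : 'M[R]_(a, b)) (X : 'M[R]_(b, a)) : Prop :=
  [/\ M *m X *m M = M, X *m M *m X = X,
      (M *m X)^T = M *m X & (X *m M)^T = X *m M].

Definition pinv (a b : nat) (M : 'M[R]_(a, b)) : 'M[R]_(b, a) :=
  match pselect (exists X, is_pinv M X) with
  | left e => proj1_sig (cid e)
  | right _ => 0
  end.

Definition mxfun_derive (a b : nat) (M : R -> 'M[R]_(a, b)) : R -> 'M[R]_(a, b) :=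
  fun t => \matrix_(i, j) derive1 (fun s => M s i j) t.

Definition mxfun_deriven (k a b : nat) (M : R -> 'M[R]_(a, b)) : R -> 'M[R]_(a, b) :=
  fun t => \matrix_(i, j) derive1n k (fun s => M s i j) t.

Definition mx_bounded (a b : nat) (M : R -> 'M[R]_(a, b)) : Prop :=
  exists K : R, forall t i j, `|M t i j| <= K.

Definition mx_smooth (a b : nat) (M : R -> 'M[R]_(a, b)) : Prop :=
  forall i j k t, derivable (derive1n k (fun s => M s i j)) t 1.

Definition mx_C1 (a b : nat) (M : R -> 'M[R]_(a, b)) : Prop :=
  forall i j, (forall t, derivable (fun s => M s i j) t 1) /\
              continuous (derive1 (fun s => M s i j)).

(* Lyapunov transformation: C^1, values in Gl_n, M, M^-1 and dM/dt bounded.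
   M t invertible is expressed by a two-sided inverse Minv t (forcing a = b). *)
Definition Lyapunov_transformation (a b : nat) (M : R -> 'M[R]_(a, b)) : Prop :=
  mx_C1 M /\
  exists Minv : R -> 'M[R]_(b, a),
    (forall t, M t *m Minv t = 1%:M /\ Minv t *m M t = 1%:M) /\
    mx_bounded M /\ mx_bounded Minv /\ mx_bounded (mxfun_derive M).

Definition diffA (n m : nat) (A : 'M[R]_n) (M : R -> 'M[R]_(n, m)) : R -> 'M[R]_(n, m) :=
  fun t => mxfun_derive M t - A *m M t.

Definition calB (n m r : nat) (A : 'M[R]_n) (B : 'M[R]_(n, m))
  (L : R -> 'M[R]_m) (t : R) : 'M[R]_(n, \sum_(k < r) m) :=
  \mxrow_(k < r) (iter k (diffA A) (fun s => B *m L s) t).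

Definition calC (n p r : nat) (A : 'M[R]_n) (C : 'M[R]_(p, n))
  : 'M[R]_(\sum_(k < r) p, n) :=
  \mxcol_(k < r) (C *m A ^+ k).

Definition im_eq_ker (n k q : nat) (V : 'M[R]_(n, k)) (K : 'M[R]_(q, n)) : Prop :=
  forall x : 'cV[R]_n, K *m x = 0 <-> exists y : 'cV[R]_k, x = V *m y.

Definition calN (n m p r : nat) (A : 'M[R]_n) (B : 'M[R]_(n, m)) (C : 'M[R]_(p, n))
  (L : R -> 'M[R]_m) (V : 'M[R]_(n, n - \rank (calC r A C))) (t : R)
  : 'M[R]_(n - \rank (calC r A C), n) :=
  pinv V *m (1%:M - calB r A B L t *m pinv (calC r A C *m calB r A B L t) *m calC r A C).

Definition calU (n m p r : nat) (A : 'M[R]_n) (B : 'M[R]_(n, m)) (C : 'M[R]_(p, n))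
  (L : R -> 'M[R]_m) (V : 'M[R]_(n, n - \rank (calC r A C))) (t : R)
  : 'M[R]_(\sum_(k < r) p + (n - \rank (calC r A C)), n) :=
  col_mx (calC r A C) (calN B L V t).

Definition f_cont_bdd (n m : nat) (f : R * 'cV[R]_n * 'cV[R]_m -> 'cV[R]_n) : Prop :=
  continuous f /\ exists K : R, forall x i j, `|f x i j| <= K.

Definition P1 (n m p : nat) (B : 'M[R]_(n, m)) (L : R -> 'M[R]_m) : Prop :=
  mx_smooth L /\
  (forall k, (k <= n)%N -> mx_bounded (mxfun_deriven k L)) /\
  exists q : nat, (p <= q)%N /\ forall t, \rank (B *m L t) = q.

Definition P2 (n m p r : nat) (A : 'M[R]_n) (B : 'M[R]_(n, m)) (C : 'M[R]_(p, n))
  (f : R * 'cV[R]_n * 'cV[R]_m -> 'cV[R]_n) (L : R -> 'M[R]_m) : Prop :=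
  (0 < r)%N /\
  (forall k, (k.+2 <= r)%N ->
     (forall t, C *m A ^+ k *m B *m L t = 0) /\
     (forall x, C *m A ^+ k *m f x = 0)) /\
  (forall t, \rank (C *m A ^+ r.-1 *m B *m L t) = p).

Definition det_cond (n m p r : nat) (A : 'M[R]_n) (B : 'M[R]_(n, m)) (C : 'M[R]_(p, n))
  (L : R -> 'M[R]_m) : Prop :=
  exists alpha : R, 0 < alpha /\
    forall t, alpha <= \det (calC r A C *m calB r A B L t *m (calC r A C *m calB r A B L t)^T).

End Defs.

(* Main.v *)
Require Import Defs.
From HB Require Import structures.
From mathcomp Require Import all_boot all_order all_algebra.
From mathcomp Require Import all_classical all_reals all_analysis.
From mathcomp Require Import ring lra.
Import Order.TTheory GRing.Theory Num.Theory.
Import numFieldNormedType.Exports.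
Local Open Scope ring_scope.

Set Implicit Arguments. Unset Strict Implicit. Unset Printing Implicit Defensive.

Section GfSec.
Variable R : realType.
Implicit Types f g : R -> R.

Definition bdd (g : R -> R) := exists K, forall t, `|g t| <= K.
Definition Gf (g : R -> R) :=
  (forall t, derivable g t 1) /\ continuous (derive1 g) /\ bdd g /\ bdd (derive1 g).

Lemma Gf_ext f g : (forall t, f t = g t) -> Gf f -> Gf g.
Proof. by move=> fg; have -> : f = g by apply/funext. Qed.

Lemma bdd_ext f g : (forall t, f t = g t) -> bdd f -> bdd g.
Proof. by move=> fg; have -> : f = g by apply/funext. Qed.

Lemma der_cont f t : derivable f t 1 -> {for t, continuous f}.
Proof. by move=> /derivable1_diffP /differentiable_continuous. Qed.

Lemma contD f g t : {for t, continuous f} -> {for t, continuous g} ->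
  {for t, continuous (fun x => f x + g x)}.
Proof. exact: continuousD. Qed.

Lemma contM f g t : {for t, continuous f} -> {for t, continuous g} ->
  {for t, continuous (fun x => f x * g x)}.
Proof. exact: continuousM. Qed.

Lemma d1D f g t : derivable f t 1 -> derivable g t 1 ->
  derive1 (fun s => f s + g s) t = derive1 f t + derive1 g t.
Proof. by move=> df dg; rewrite !derive1E (deriveD df dg). Qed.

Lemma dbD f g t : derivable f t 1 -> derivable g t 1 ->
  derivable (fun s => f s + g s) t 1.
Proof. by move=> df dg; apply: (derivableD df dg). Qed.

Lemma d1M f g t : derivable f t 1 -> derivable g t 1 ->
  derive1 (fun s => f s * g s) t = f t * derive1 g t + g t * derive1 f t.
Proof. by move=> df dg; rewrite !derive1E (deriveM df dg). Qed.

Lemma dbM f g t : derivable f t 1 -> derivable g t 1 ->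
  derivable (fun s => f s * g s) t 1.
Proof. by move=> df dg; apply: (derivableM df dg). Qed.

Lemma d1V f t : f t != 0 -> derivable f t 1 ->
  derive1 (fun s => (f s)^-1) t = - (f t) ^- 2 * derive1 f t.
Proof. by move=> f0 df; rewrite !derive1E (deriveV f0 df). Qed.

Lemma dbV f t : f t != 0 -> derivable f t 1 ->
  derivable (fun s => (f s)^-1) t 1.
Proof. by move=> f0 df; apply: (derivableV f0 df). Qed.

Lemma bddD f g : bdd f -> bdd g -> bdd (fun t => f t + g t).
Proof.
move=> [a ha] [b hb]; exists (a + b) => t.
by apply: le_trans (ler_normD _ _) _; apply: lerD.
Qed.

Lemma bddM f g : bdd f -> bdd g -> bdd (fun t => f t * g t).
Proof.
move=> [a ha] [b hb]; exists (a * b) => t.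
rewrite normrM; apply: ler_pM => //.
Qed.

Lemma Gf_cst c : Gf (fun _ => c).
Proof.
have d : forall t, derive1 (fun _ : R => c) t = 0.
  by move=> t; rewrite derive1E derive_cst.
split; first by move=> t; exact: derivable_cst.
split.
  have -> : derive1 (fun _ : R => c) = fun _ => 0 by apply/funext.
  exact: cst_continuous.
split; first by exists `|c|.
by exists 0 => t; rewrite d normr0.
Qed.

Lemma Gf_add f g : Gf f -> Gf g -> Gf (fun t => f t + g t).
Proof.
move=> [df [cf [bf bf']]] [dg [cg [bg bg']]].
have e : derive1 (fun s => f s + g s) = fun t => derive1 f t + derive1 g t.
  by apply/funext => t; rewrite d1D.
split; first by move=> t; exact: dbD.
rewrite e; split.
  move=> t; apply: contD; [exact: cf | exact: cg].
split; exact: bddD.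
Qed.

Lemma Gf_mul f g : Gf f -> Gf g -> Gf (fun t => f t * g t).
Proof.
move=> [df [cf [bf bf']]] [dg [cg [bg bg']]].
have e : derive1 (fun s => f s * g s) =
   fun t => f t * derive1 g t + g t * derive1 f t.
  by apply/funext => t; rewrite d1M.
split; first by move=> t; exact: dbM.
rewrite e; split.
  move=> t; apply: (@contD (fun x => f x * derive1 g x) (fun x => g x * derive1 f x)).
    by apply: (@contM f (derive1 g)); [exact: der_cont | exact: cg].
  by apply: (@contM g (derive1 f)); [exact: der_cont | exact: cf].
split; first exact: bddM.
by apply: bddD; apply: bddM.
Qed.

Lemma Gf_inv f c : 0 < c -> (forall t, c <= f t) -> Gf f -> Gf (fun t => (f t)^-1).
Proof.
move=> c0 fc [df [cf [bf [K bf']]]].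
have f0 : forall t, f t != 0.
  by move=> t; rewrite gt_eqF // (lt_le_trans c0 (fc t)).
have e : derive1 (fun s => (f s)^-1) = fun t => - (f t) ^- 2 * derive1 f t.
  by apply/funext => t; rewrite d1V.
split; first by move=> t; exact: dbV.
have fp : forall t, 0 < f t by move=> t; exact: lt_le_trans c0 (fc t).
have ib : forall t, `|(f t)^-1| <= c^-1.
  move=> t; rewrite ger0_norm; last by rewrite invr_ge0 ltW.
  by rewrite lef_pV2 ?posrE.
rewrite e; split.
  move=> t; apply: (@contM (fun x => - (f x) ^- 2) (derive1 f)); last exact: cf.
  apply: continuousN.
  have -> : (fun x => (f x) ^- 2) = (fun x => ((f x) ^+ 2)^-1) by [].
  apply: continuousV; first by rewrite expf_neq0.
  rewrite [X in {for t, continuous X}](_ : _ = (fun x => f x * f x)); last first.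
    by apply/funext => x; rewrite expr2.
  by apply: contM; exact: der_cont.
split; first by exists c^-1.
exists (c^-1 * c^-1 * K) => t.
rewrite normrM normrN -exprVn expr2 normrM.
apply: ler_pM; rewrite ?mulr_ge0 //; first exact: ler_pM.

Qed.

Lemma Gf_sum (I : Type) (s : seq I) (F : I -> R -> R) :
  (forall i, Gf (F i)) -> Gf (fun t => \sum_(i <- s) F i t).
Proof.
move=> h; elim: s => [|x s IH].
  by apply: (Gf_ext _ (Gf_cst 0)) => t; rewrite big_nil.
apply: (Gf_ext _ (Gf_add (h x) IH)) => t; by rewrite big_cons.
Qed.

Lemma Gf_prod (I : Type) (s : seq I) (F : I -> R -> R) :
  (forall i, Gf (F i)) -> Gf (fun t => \prod_(i <- s) F i t).
Proof.
move=> h; elim: s => [|x s IH].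
  by apply: (Gf_ext _ (Gf_cst 1)) => t; rewrite big_nil.
apply: (Gf_ext _ (Gf_mul (h x) IH)) => t; by rewrite big_cons.
Qed.

End GfSec.


Section SdSec.
Variable R : realType.
Implicit Types f g : R -> R.

Definition Sd (d : nat) (g : R -> R) :=
  (forall k t, derivable (derive1n k g) t 1) /\
  (forall k, (k <= d)%N -> bdd (derive1n k g)).

Lemma Sd_ext d f g : (forall t, f t = g t) -> Sd d f -> Sd d g.
Proof. by move=> fg; have -> : f = g by apply/funext. Qed.

Lemma d1cst (c : R) t : derive1 (fun _ : R => c) t = 0.
Proof. by rewrite derive1E derive_cst. Qed.

Lemma dn_add f g k : (forall j t, derivable (derive1n j f) t 1) ->
  (forall j t, derivable (derive1n j g) t 1) ->
  derive1n k (fun t => f t + g t) = fun t => derive1n k f t + derive1n k g t.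
Proof.
move=> df dg; elim: k => [|k IH]; first by rewrite !derive1n0.
rewrite derive1nS IH; apply/funext => t.
by rewrite d1D ?derive1nS.
Qed.

Lemma dn_scale f c k : (forall j t, derivable (derive1n j f) t 1) ->
  derive1n k (fun t => c * f t) = fun t => c * derive1n k f t.
Proof.
move=> df; elim: k => [|k IH]; first by rewrite !derive1n0.
rewrite derive1nS IH; apply/funext => t.
rewrite d1M; [|exact: derivable_cst|exact: df].
by rewrite d1cst derive1nS mulr0 addr0.
Qed.

Lemma Sd_add d f g : Sd d f -> Sd d g -> Sd d (fun t => f t + g t).
Proof.
move=> [df bf] [dg bg]; rewrite /Sd.
have e := dn_add _ df dg.
split; first by move=> k t; rewrite e; apply: dbD.
by move=> k kd; rewrite e; apply: bddD; [exact: bf | exact: bg].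
Qed.

Lemma Sd_scale d f c : Sd d f -> Sd d (fun t => c * f t).
Proof.
move=> [df bf]; rewrite /Sd.
have e := dn_scale c _ df.
split.
  move=> k t; rewrite e; apply: dbM => //; exact: derivable_cst.
move=> k kd; rewrite e; apply: bddM; last exact: bf.
by exists `|c|.
Qed.

Lemma Sd_cst d c : Sd d (fun _ => c).
Proof.
have e : forall k, derive1n k.+1 (fun _ : R => c) = fun _ => 0.
  elim=> [|k IH]; first by rewrite derive1n1; apply/funext => t; rewrite d1cst.
  by rewrite derive1nS IH; apply/funext => t; rewrite d1cst.
split.
  by case=> [|k] t; [rewrite derive1n0; exact: derivable_cst | rewrite e; exact: derivable_cst].
case=> [|k] _; first by rewrite derive1n0; exists `|c|.
by rewrite e; exists 0 => t; rewrite normr0.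
Qed.

Lemma Sd_sum d (I : Type) (s : seq I) (F : I -> R -> R) :
  (forall i, Sd d (F i)) -> Sd d (fun t => \sum_(i <- s) F i t).
Proof.
move=> h; elim: s => [|x s IH].
  by apply: (Sd_ext _ (Sd_cst d 0)) => t; rewrite big_nil.
apply: (Sd_ext _ (Sd_add (h x) IH)) => t; by rewrite big_cons.
Qed.

Lemma Sd_derive d g : Sd d.+1 g -> Sd d (derive1 g).
Proof.
move=> [dg bg]; split => [k t|k kd]; rewrite -derive1Sn; [exact: dg | exact: bg].
Qed.

Lemma Sd_mono d d' g : (d' <= d)%N -> Sd d g -> Sd d' g.
Proof.
move=> dd [dg bg]; split => // k kd; apply: bg; exact: leq_trans kd dd.
Qed.

Lemma Sd_Gf g : Sd 1 g -> Gf g.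
Proof.
move=> [dg bg]; split; first by move=> t; have := dg 0%N t; rewrite derive1n0.
split.
  move=> t; apply: der_cont; have := dg 1%N t; by rewrite derive1n1.
split; first by have := bg 0%N isT; rewrite derive1n0.
by have := bg 1%N isT; rewrite derive1n1.
Qed.

End SdSec.


Section MxSec.
Variable R : realType.

Definition GM a b (M : R -> 'M[R]_(a, b)) := forall i j, Gf (fun t => M t i j).
Definition SM d a b (M : R -> 'M[R]_(a, b)) := forall i j, Sd d (fun t => M t i j).

Lemma bdd_fin (I : finType) (P : I -> R -> R) :
  (forall i, bdd (P i)) -> exists K, forall t i, `|P i t| <= K.
Proof.
move=> h.
pose Kf i := proj1_sig (cid (h i)).
have hK : forall i t, `|P i t| <= Kf i by move=> i; exact: (proj2_sig (cid (h i))).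
have K0 : forall i, 0 <= Kf i by move=> i; exact: le_trans (normr_ge0 _) (hK i 0).
exists (\sum_i Kf i) => t i.
apply: le_trans (hK i t) _.
rewrite (bigD1 i) //= lerDl; apply: sumr_ge0 => j _; exact: K0.
Qed.

Lemma GM_bounded a b (M : R -> 'M[R]_(a, b)) : GM M -> mx_bounded M.
Proof.
move=> h; have [K hK] := @bdd_fin _ (fun ij t => M t ij.1 ij.2)
   (fun ij => proj1 (proj2 (proj2 (h ij.1 ij.2)))).
by exists K => t i j; exact: (hK t (i, j)).
Qed.

Lemma GM_bounded_der a b (M : R -> 'M[R]_(a, b)) : GM M -> mx_bounded (mxfun_derive M).
Proof.
move=> h; have [K hK] := @bdd_fin _ (fun ij => derive1 (fun t => M t ij.1 ij.2))
   (fun ij => proj2 (proj2 (proj2 (h ij.1 ij.2)))).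
by exists K => t i j; rewrite /mxfun_derive mxE; exact: (hK t (i, j)).
Qed.

Lemma GM_C1 a b (M : R -> 'M[R]_(a, b)) : GM M -> mx_C1 M.
Proof. by move=> h i j; have [d [c _]] := h i j. Qed.

Lemma GM_ext a b (M N : R -> 'M[R]_(a, b)) : (forall t, M t = N t) -> GM M -> GM N.
Proof. by move=> e; have -> : M = N by apply/funext. Qed.

Lemma GM_cst a b (M0 : 'M[R]_(a, b)) : GM (fun _ => M0).
Proof. by move=> i j; exact: Gf_cst. Qed.

Lemma GM_add a b (M N : R -> 'M[R]_(a, b)) : GM M -> GM N -> GM (fun t => M t + N t).
Proof.
move=> hM hN i j; apply: (Gf_ext _ (Gf_add (hM i j) (hN i j))) => t; by rewrite mxE.
Qed.

Lemma GM_opp a b (M : R -> 'M[R]_(a, b)) : GM M -> GM (fun t => - M t).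
Proof.
move=> hM i j; apply: (Gf_ext _ (Gf_mul (Gf_cst (-1)) (hM i j))) => t.
by rewrite mxE mulN1r.
Qed.

Lemma GM_mul a b c (M : R -> 'M[R]_(a, b)) (N : R -> 'M[R]_(b, c)) :
  GM M -> GM N -> GM (fun t => M t *m N t).
Proof.
move=> hM hN i j.
have := @Gf_sum _ _ (index_enum 'I_b) (fun l t => M t i l * N t l j) (fun l => Gf_mul (hM i l) (hN l j)).
by apply: Gf_ext => t; rewrite mxE.
Qed.

Lemma GM_tr a b (M : R -> 'M[R]_(a, b)) : GM M -> GM (fun t => (M t)^T).
Proof. by move=> hM i j; apply: (Gf_ext _ (hM j i)) => t; rewrite mxE. Qed.

Lemma GM_scale a b (s : R -> R) (M : R -> 'M[R]_(a, b)) :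
  Gf s -> GM M -> GM (fun t => s t *: M t).
Proof.
move=> hs hM i j; apply: (Gf_ext _ (Gf_mul hs (hM i j))) => t; by rewrite mxE.
Qed.

Lemma GM_row a b1 b2 (M : R -> 'M[R]_(a, b1)) (N : R -> 'M[R]_(a, b2)) :
  GM M -> GM N -> GM (fun t => row_mx (M t) (N t)).
Proof.
move=> hM hN i j.
have e : forall t, match fintype.split j with inl k => M t i k | inr k => N t i k end = row_mx (M t) (N t) i j.
  by move=> t; rewrite mxE.
apply: (Gf_ext e).
by case: (fintype.split j) => k.
Qed.

Lemma GM_col a1 a2 b (M : R -> 'M[R]_(a1, b)) (N : R -> 'M[R]_(a2, b)) :
  GM M -> GM N -> GM (fun t => col_mx (M t) (N t)).
Proof.
move=> hM hN i j.
have e : forall t, match fintype.split i with inl k => M t k j | inr k => N t k j end = col_mx (M t) (N t) i j.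
  by move=> t; rewrite mxE.
apply: (Gf_ext e).
by case: (fintype.split i) => k.
Qed.

Lemma GM_det a (M : R -> 'M[R]_a) : GM M -> Gf (fun t => \det (M t)).
Proof.
move=> hM; rewrite /determinant.
apply: Gf_sum => s; apply: Gf_mul; first exact: Gf_cst.
by apply: Gf_prod => i; exact: hM.
Qed.

Lemma GM_adj a (M : R -> 'M[R]_a) : GM M -> GM (fun t => \adj (M t)).
Proof.
move=> hM i j; apply: (Gf_ext (f := fun t => cofactor (M t) j i)).
  by move=> t; rewrite mxE.
rewrite /cofactor; apply: Gf_mul; first exact: Gf_cst.
apply: (GM_det (M := fun t => row' j (col' i (M t)))) => k l.
by apply: (Gf_ext _ (hM _ _)) => t; rewrite !mxE.
Qed.

Lemma GM_inv a (M : R -> 'M[R]_a) c : 0 < c -> (forall t, c <= \det (M t)) ->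
  GM M -> GM (fun t => invmx (M t)).
Proof.
move=> c0 hc hM.
apply: (GM_ext (M := fun t => (\det (M t))^-1 *: \adj (M t))).
  move=> t; rewrite /invmx unitmxE unitfE gt_eqF //.
  exact: lt_le_trans c0 (hc t).
apply: GM_scale; last exact: GM_adj.
exact: (Gf_inv c0 hc (GM_det hM)).
Qed.

Lemma SM_Gf a b (M : R -> 'M[R]_(a, b)) : SM 1 M -> GM M.
Proof. by move=> h i j; apply: Sd_Gf. Qed.

Lemma SM_mono d d' a b (M : R -> 'M[R]_(a, b)) : (d' <= d)%N -> SM d M -> SM d' M.
Proof. by move=> dd h i j; apply: Sd_mono dd _. Qed.

Lemma SM_mull d a b c (B : 'M[R]_(a, b)) (M : R -> 'M[R]_(b, c)) :
  SM d M -> SM d (fun t => B *m M t).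
Proof.
move=> h i j.
have := @Sd_sum _ d _ (index_enum 'I_b) (fun l t => B i l * M t l j) (fun l => Sd_scale (B i l) (h l j)).
by apply: Sd_ext => t; rewrite mxE.
Qed.

Lemma SM_diffA d a b (A : 'M[R]_a) (M : R -> 'M[R]_(a, b)) :
  SM d.+1 M -> SM d (diffA A M).
Proof.
move=> h i j.
have h1 : SM d (fun t => A *m M t) by apply: SM_mull; apply: SM_mono h.
apply: (Sd_ext _ (Sd_add (Sd_derive (h i j)) (Sd_scale (-1) (h1 i j)))).
move=> t; by rewrite /diffA /mxfun_derive !mxE mulN1r.
Qed.

Lemma SM_iter n m (A : 'M[R]_n) (B : 'M[R]_(n, m)) (L : R -> 'M[R]_m) k :
  SM n L -> (k <= n)%N -> SM (n - k) (iter k (diffA A) (fun s => B *m L s)).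
Proof.
move=> hL; elim: k => [|k IH] kn.
  by rewrite subn0 /=; apply: SM_mull.
rewrite iterS; apply: SM_diffA.
have -> : (n - k.+1).+1 = (n - k)%N by rewrite subnSK.
by apply: IH; apply: ltnW.
Qed.

End MxSec.


Section AlgSec.
Variable R : realType.

Lemma col_mulmx a b c (A : 'M[R]_(a, b)) (B : 'M[R]_(b, c)) j :
  col j (A *m B) = A *m col j B.
Proof. by rewrite !colE mulmxA. Qed.

Lemma colsP_eq a b (A B : 'M[R]_(a, b)) : (forall j, col j A = col j B) -> A = B.
Proof.
move=> h; apply/matrixP => i j.
by have := congr1 (fun M : 'M[R]_(a, 1) => M i 0) (h j); rewrite !mxE.
Qed.

Lemma sumsq_eq0 a (w : 'cV[R]_a) : w^T *m w = 0 -> w = 0.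
Proof.
move=> h; have h0 : \sum_i w i 0 ^+ 2 = 0.
  have e : \sum_i w i 0 ^+ 2 = (w^T *m w) 0 0.
    by rewrite mxE; apply: eq_bigr => i _; rewrite !mxE expr2.
  by rewrite e h mxE.
apply/matrixP => i j; rewrite ord1 mxE.
have := psumr_eq0P (P := predT) (F := fun i => w i 0 ^+ 2) _ h0 (i := i) isT.
move=> /(_ _)/eqP; rewrite expf_eq0 /= => /(_ _)/eqP; apply.
by move=> k _; exact: sqr_ge0.
Qed.

Lemma gram_unit a b (F : 'M[R]_(a, b)) :
  (forall z : 'cV_b, F *m z = 0 -> z = 0) -> (F^T *m F) \in unitmx.
Proof.
move=> inj; rewrite unitmxE unitfE; apply/negP => /det0P [v vn0 hv].
have hz : F^T *m F *m v^T = 0.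
  have := congr1 trmx hv; rewrite trmx_mul trmx_mul trmxK trmx0 => ->.
  done.
have : (F *m v^T)^T *m (F *m v^T) = 0.
  by rewrite trmx_mul -mulmxA (mulmxA F^T) hz mulmx0.
move=> /sumsq_eq0 /inj /(congr1 trmx); rewrite trmxK trmx0 => v0.
by move: vn0; rewrite v0 eqxx.
Qed.

Lemma pinv_ex a b (M : 'M[R]_(a, b)) X : is_pinv M X -> is_pinv M (Defs.pinv M).
Proof.
move=> hX; rewrite /Defs.pinv; case: pselect => [e|ne]; last by exfalso; apply: ne; exists X.
exact: (proj2_sig (cid e)).
Qed.

Lemma pinv_col_full a b (F : 'M[R]_(a, b)) : (F^T *m F) \in unitmx ->
  is_pinv F (invmx (F^T *m F) *m F^T).
Proof.
move=> u.
have XF : invmx (F^T *m F) *m F^T *m F = 1%:M by rewrite -mulmxA mulVmx.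
split.
- by rewrite mulmxA -(mulmxA _ F^T F) -mulmxA mulVmx // mulmx1.
- by rewrite XF mul1mx.
- by rewrite !trmx_mul trmxK trmx_inv trmx_mul trmxK mulmxA.
- by rewrite XF trmx1.
Qed.

Lemma pinv_row_full a b (M : 'M[R]_(a, b)) : (M *m M^T) \in unitmx ->
  Defs.pinv M = M^T *m invmx (M *m M^T).
Proof.
move=> u.
set X0 := M^T *m invmx (M *m M^T).
have MX0 : M *m X0 = 1%:M by rewrite /X0 mulmxA mulmxV.
have hX0 : is_pinv M X0.
  split.
  - by rewrite MX0 mul1mx.
  - by rewrite -mulmxA MX0 mulmx1.
  - by rewrite MX0 trmx1.
  - by rewrite /X0 !trmx_mul trmx_inv trmx_mul trmxK mulmxA.
have [h1 h2 h3 h4] := pinv_ex hX0.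
set X := Defs.pinv M in h1 h2 h3 h4 *.
have MX : M *m X = 1%:M.
  by rewrite -[M *m X]mulmx1 -MX0 mulmxA h1.
have eX : X = M^T *m (X^T *m X).
  by rewrite mulmxA -trmx_mul h4 h2.
rewrite eX; set Y := X^T *m X; set S := M *m M^T.
have : S *m Y = 1%:M by rewrite /S -mulmxA /Y -eX.
move=> /(congr1 (mulmx (invmx S))); rewrite mulmxA mulVmx // mul1mx mulmx1.
by move=> ->.
Qed.

End AlgSec.


Section AlgSec2.
Variable R : realType.

Lemma inj_mx n v (V : 'M[R]_(n, v)) : (forall z : 'cV_v, V *m z = 0 -> z = 0) ->
  forall c (Z : 'M[R]_(v, c)), V *m Z = 0 -> Z = 0.
Proof.
move=> h c Z e; apply: colsP_eq => j; rewrite col0; apply: h.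
by rewrite -col_mulmx e col0.
Qed.

Lemma U_inv (s n w v : nat) (K : 'M[R]_(s, n)) (Bt : 'M[R]_(n, w)) (V : 'M[R]_(n, v)) :
  (K *m Bt *m (K *m Bt)^T) \in unitmx ->
  (forall x : 'cV_n, K *m x = 0 <-> exists y, x = V *m y) ->
  (forall z : 'cV_v, V *m z = 0 -> z = 0) ->
  col_mx K (Defs.pinv V *m (1%:M - Bt *m Defs.pinv (K *m Bt) *m K)) *m
    row_mx (Bt *m Defs.pinv (K *m Bt)) V = 1%:M /\
  row_mx (Bt *m Defs.pinv (K *m Bt)) V *m
    col_mx K (Defs.pinv V *m (1%:M - Bt *m Defs.pinv (K *m Bt) *m K)) = 1%:M.
Proof.
move=> u hK Vinj.
set M := K *m Bt in u *.
set X := Defs.pinv M.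
have MX : M *m X = 1%:M by rewrite /X pinv_row_full // mulmxA mulmxV.
have KV : K *m V = 0.
  apply: colsP_eq => j; rewrite col0 col_mulmx; apply/hK.
  by exists (delta_mx j 0); rewrite colE.
have [p1 p2 p3 p4] := pinv_ex (pinv_col_full (gram_unit Vinj)).
set Vp := Defs.pinv V in p1 p2 p3 p4 *.
have VpV : Vp *m V = 1%:M.
  apply/eqP; rewrite -subr_eq0; apply/eqP; apply: (inj_mx Vinj).
  by rewrite mulmxBr mulmxA p1 mulmx1 subrr.
set W := 1%:M - Bt *m X *m K.
have KW : K *m W = 0.
  by rewrite /W mulmxBr mulmx1 !mulmxA -/M MX mul1mx subrr.
have VVpW : V *m Vp *m W = W.
  apply: colsP_eq => j; rewrite !col_mulmx.
  have [y ->] : exists y, col j W = V *m y.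
    by apply/hK; rewrite -col_mulmx KW col0.
  by rewrite -(mulmxA V Vp) (mulmxA Vp) VpV mul1mx.
split.
  rewrite mul_col_row (scalar_mx_block s v 1).
  congr block_mx.
  - by rewrite mulmxA -/M MX.
  - exact: KV.
  - rewrite -mulmxA /W mulmxBl mul1mx -!mulmxA (mulmxA K) -/M MX mulmx1.
    by rewrite subrr mulmx0.
  - by rewrite -mulmxA /W mulmxBl mul1mx -(mulmxA _ K V) KV mulmx0 subr0 VpV.
rewrite mul_row_col mulmxA VVpW /W.
by rewrite addrC subrK.
Qed.

End AlgSec2.

Section VinjSec.
Variable R : realType.

Lemma KV0 n s v (K : 'M[R]_(s, n)) (V : 'M[R]_(n, v)) : im_eq_ker V K -> K *m V = 0.
Proof.
move=> hK; apply: colsP_eq => j; rewrite col0 col_mulmx; apply/hK.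
by exists (delta_mx j 0); rewrite colE.
Qed.

Lemma V_inj n s (K : 'M[R]_(s, n)) (V : 'M[R]_(n, n - \rank K)) :
  im_eq_ker V K -> forall z : 'cV_(n - \rank K), V *m z = 0 -> z = 0.
Proof.
move=> hK.
have KV := KV0 hK.
have S1 : (V^T <= kermx K^T)%MS.
  by rewrite sub_kermx -trmx_mul KV trmx0.
have S2 : (kermx K^T <= V^T)%MS.
  apply/row_subP => i.
  have : (row i (kermx K^T) <= kermx K^T)%MS by exact: row_sub.
  rewrite sub_kermx => /eqP e.
  have : K *m (row i (kermx K^T))^T = 0.
    by have := congr1 trmx e; rewrite trmx_mul trmxK trmx0.
  move=> /hK [y ey]; apply/submxP; exists y^T.
  by rewrite -trmx_mul -ey trmxK.
have rk : \rank V^T = (n - \rank K)%N.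
  have e : \rank V^T = \rank (kermx K^T).
    by apply/eqP; rewrite eqn_leq (mxrankS S1) (mxrankS S2).
  by rewrite e mxrank_ker mxrank_tr.
have rf : row_free V^T by rewrite /row_free rk.
move=> z Vz; apply: trmx_inj; rewrite trmx0.
apply: (row_free_inj rf); rewrite /= -trmx_mul Vz trmx0 mul0mx.
done.
Qed.
End VinjSec.


Section Sig.
Variable R : realType.

Definition sigm (t : R) : R := expR t * (1 + expR t)^-1.

Lemma opE_gt0 (t : R) : 0 < 1 + expR t.
Proof. by rewrite addr_gt0 // expR_gt0. Qed.

Lemma sig_gt0 t : 0 < sigm t.
Proof. by rewrite /sigm mulr_gt0 ?expR_gt0 // invr_gt0 opE_gt0. Qed.

Lemma sig_le1 t : sigm t <= 1.
Proof.
rewrite /sigm ler_pdivrMr ?opE_gt0 // mul1r lerDr; exact: ler01.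
Qed.

Lemma sig_le_exp t : sigm t <= expR t.
Proof.
rewrite /sigm ler_pdivrMr ?opE_gt0 // ler_peMr ?expR_ge0 // lerDl expR_ge0 //.
Qed.

Lemma dcomp (f g : R -> R) x : derivable f x 1 -> derivable g (f x) 1 ->
  derivable (g \o f) x 1.
Proof.
rewrite !derivable1_diffP => df dg; exact: differentiable_comp.
Qed.

Lemma sig_der t : derivable sigm t 1.
Proof.
apply: dbM; first exact: derivable_expR.
apply: dbV; first by rewrite gt_eqF // opE_gt0.
apply: dbD; [exact: derivable_cst | exact: derivable_expR].
Qed.

Lemma sig_d1 t : derive1 sigm t = sigm t - sigm t ^+ 2.
Proof.
rewrite /sigm d1M; [|exact: derivable_expR|].
- rewrite d1V; [|by rewrite gt_eqF // opE_gt0|].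
  + rewrite d1D; [|exact: derivable_cst|exact: derivable_expR].
    have de : 'D_1 (@expR R) t = expR t.
      by have := congr1 (fun g => g t) (@derive_expR R).
    rewrite !derive1E derive_cst de add0r.
    have h := opE_gt0 t; set e := expR t in h *.
    by field; rewrite gt_eqF.
  + apply: dbD; [exact: derivable_cst | exact: derivable_expR].
- apply: dbV; first by rewrite gt_eqF // opE_gt0.
  apply: dbD; [exact: derivable_cst | exact: derivable_expR].
Qed.

Definition Psig : {poly R} := 'X - 'X ^+ 2.

Lemma sig_d1_poly : derive1 sigm = horner Psig \o sigm.
Proof. by apply/funext => t; rewrite sig_d1 /= /Psig !hornerE. Qed.

Lemma sig_dn k : exists Q : {poly R}, derive1n k sigm = horner Q \o sigm.
Proof.
elim: k => [|k [Q hQ]].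
  by exists 'X; rewrite derive1n0; apply/funext => t /=; rewrite hornerX.
exists (Q^`() * Psig); rewrite derive1nS hQ; apply/funext => t.
rewrite derive1_comp; [|exact: sig_der|exact: derivable_horner].
by rewrite -derivE sig_d1_poly /= hornerM.
Qed.

Lemma sig_smooth k t : derivable (derive1n k sigm) t 1.
Proof.
have [Q ->] := sig_dn k.
apply: dcomp; [exact: sig_der | exact: derivable_horner].
Qed.

End Sig.


Section Part1.
Variable R : realType.

Lemma sum_const_p r p : (\sum_(k < r) p = r * p)%N.
Proof. by rewrite big_const_ord iter_addn_0 mulnC. Qed.

Lemma GM_calB n m r (A : 'M[R]_n) (B : 'M[R]_(n, m)) (L : R -> 'M[R]_m) :
  SM n L -> (r <= n)%N -> GM (calB r A B L).
Proof.
move=> hL rn i j.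
have e : forall t, iter (tagnat.sig1 j) (diffA A) (fun s => B *m L s) t i (tagnat.sig2 j)
   = calB r A B L t i j by move=> t; rewrite /calB mxE.
apply: (Gf_ext e); apply: Sd_Gf.
have hj : (tagnat.sig1 j < n)%N by exact: leq_trans (ltn_ord _) rn.
apply: (@Sd_mono _ (n - tagnat.sig1 j)); first by rewrite subn_gt0.
by apply: SM_iter => //; exact: ltnW.
Qed.

Lemma part1 n m p r (A : 'M[R]_n) (B : 'M[R]_(n, m)) (C : 'M[R]_(p, n))
     (f : R * 'cV[R]_n * 'cV[R]_m -> 'cV[R]_n) (L : R -> 'M[R]_m)
     (V : 'M[R]_(n, n - \rank (calC r A C))) :
     (p <= m)%N -> f_cont_bdd f -> P1 p B L -> P2 r A B C f L ->
     im_eq_ker V (calC r A C) ->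
     det_cond r A B C L ->
     Lyapunov_transformation (calU B L V).
Proof.
move=> _ _ [Ls [Lb _]] _ hK [al [al0 hal]].
set K := calC r A C in V hK hal *.
have unit : forall t, (K *m calB r A B L t *m (K *m calB r A B L t)^T) \in unitmx.
  move=> t; rewrite unitmxE unitfE gt_eqF //; exact: lt_le_trans al0 (hal t).
have Vinj := V_inj hK.
have SL : SM n L.
  move=> i j; split; first by move=> k t; exact: Ls.
  move=> k kn; have [c hc] := Lb k kn; exists c => t.
  by have := hc t i j; rewrite /mxfun_deriven mxE.
have GBX : GM (fun t => calB r A B L t *m Defs.pinv (K *m calB r A B L t)).
  case: (posnP p) => [p0|pp].
    move=> i j; exfalso; have := ltn_ord j; move: (nat_of_ord j) => jj.
    by rewrite sum_const_p p0 muln0.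
  have rn : (r <= n)%N.
    have h := mxrank_unit (unit 0).
    have h1 := mxrankM_maxl (K *m calB r A B L 0) (K *m calB r A B L 0)^T.
    have h2 := mxrankM_maxl K (calB r A B L 0).
    have h3 := rank_leq_col K.
    rewrite h in h1.
    have hs := leq_trans h1 (leq_trans h2 h3).
    move: hs; rewrite sum_const_p => hs.
    exact: leq_trans (leq_pmulr r pp) hs.
  have GB := GM_calB A B SL rn.
  have GM' : GM (fun t => K *m calB r A B L t) by apply: GM_mul; [exact: GM_cst|].
  apply: (GM_ext (M := fun t => calB r A B L t *m
     ((K *m calB r A B L t)^T *m invmx (K *m calB r A B L t *m (K *m calB r A B L t)^T)))).
    by move=> t; rewrite pinv_row_full.
  apply: GM_mul => //; apply: GM_mul; first exact: GM_tr.
  apply: (GM_inv al0 hal); apply: GM_mul => //; exact: GM_tr.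
have GU : GM (calU B L V).
  rewrite /calU /calN; apply: GM_col; first exact: GM_cst.
  apply: GM_mul; first exact: GM_cst.
  apply: GM_add; first exact: GM_cst.
  apply: GM_opp; apply: GM_mul => //; exact: GM_cst.
have GMi : GM (fun t => row_mx (calB r A B L t *m Defs.pinv (K *m calB r A B L t)) V).
  by apply: GM_row => //; exact: GM_cst.
split; first exact: GM_C1.
exists (fun t => row_mx (calB r A B L t *m Defs.pinv (K *m calB r A B L t)) V).
split.
  by move=> t; rewrite /calU /calN; apply: U_inv => //; exact: unit.
split; first exact: GM_bounded.
split; first exact: GM_bounded.
exact: GM_bounded_der.
Qed.

End Part1.


Section Part2.
Variable R : realType.

Lemma size1_sum s (F : 'I_s -> R) : s = 1%N -> forall i, \sum_k F k = F i.
Proof. by move=> e; subst s => i; rewrite big_ord1 (ord1 i). Qed.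

Lemma size1_det s (D : 'M[R]_s) : s = 1%N -> forall i, \det D = D i i.
Proof. by move=> e; subst s => i; rewrite det_mx11 (ord1 i). Qed.

Lemma size1_empty s (i : 'I_s) : s = 0%N -> False.
Proof. by move=> e; subst s; case: i. Qed.

Let A1 : 'M[R]_1 := 1%:M.
Let B1 : 'M[R]_(1, 1) := 1%:M.
Let C1 : 'M[R]_(1, 1) := 1%:M.
Let f1 : R * 'cV[R]_1 * 'cV[R]_1 -> 'cV[R]_1 := fun _ => 0.
Let L1 : R -> 'M[R]_1 := fun t => (sigm t)%:M.

Lemma one_pow k : (1%:M : 'M[R]_1) ^+ k = 1%:M.
Proof. exact: expr1n. Qed.

Lemma s1e : (\sum_(k < 1) 1)%N = 1%N.
Proof. by rewrite big_ord1. Qed.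

Lemma Lent i j : (fun s => L1 s i j) = @sigm R.
Proof. by apply/funext => s; rewrite (ord1 i) (ord1 j) /L1 mxE eqxx mulr1n. Qed.

Lemma Kent i j : calC 1 A1 C1 i j = 1.
Proof.
rewrite /calC mxE /C1 /A1 one_pow mulmx1.
by rewrite mxE (ord1 j) (ord1 (tagnat.sig2 i)) eqxx.
Qed.

Lemma Bent t i j : calB 1 A1 B1 L1 t i j = sigm t.
Proof.
rewrite /calB mxE.
rewrite (_ : nat_of_ord (tagnat.sig1 j) = 0%N); last by case: (tagnat.sig1 j) => [[]].
by rewrite /= /B1 mul1mx /L1 mxE (ord1 i) (ord1 (tagnat.sig2 j)) eqxx mulr1n.
Qed.

Lemma Ment t i j : (calC 1 A1 C1 *m calB 1 A1 B1 L1 t) i j = sigm t.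
Proof. by rewrite mxE big_ord1 Kent Bent mul1r. Qed.

Lemma detE t : \det (calC 1 A1 C1 *m calB 1 A1 B1 L1 t *m
   (calC 1 A1 C1 *m calB 1 A1 B1 L1 t)^T) = sigm t ^+ 2.
Proof.
have i0lt : (0 < \sum_(k < 1) 1)%N by rewrite s1e.
pose i0 : 'I_(\sum_(k < 1) 1) := Ordinal i0lt.
by rewrite (size1_det _ s1e i0) mxE (size1_sum _ s1e i0) Ment mxE Ment expr2.
Qed.


Lemma rkK : \rank (calC 1 A1 C1) = 1%N.
Proof.
apply/eqP; rewrite eqn_leq rank_leq_col /= lt0n mxrank_eq0.
have i0lt : (0 < \sum_(k < 1) 1)%N by rewrite s1e.
apply/eqP => /matrixP /(_ (Ordinal i0lt) 0); rewrite Kent mxE.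
by move/eqP; rewrite oner_eq0.
Qed.

Lemma part2_lyap (V : 'M[R]_(1, 1 - \rank (calC 1 A1 C1))) :
  im_eq_ker V (calC 1 A1 C1) -> Lyapunov_transformation (calU B1 L1 V).
Proof.
move=> hK.
have emp : forall i : 'I_(1 - \rank (calC 1 A1 C1)), False.
  by move=> i; apply: (size1_empty i); rewrite rkK.
have ce : forall t, calU B1 L1 V t = calU B1 L1 V 0.
  move=> t; apply/matrixP => i j; rewrite /calU !mxE.
  by case: (fintype.split i) => k; [done | case: (emp k)].
have unit0 : (calC 1 A1 C1 *m calB 1 A1 B1 L1 0 *m
    (calC 1 A1 C1 *m calB 1 A1 B1 L1 0)^T) \in unitmx.
  by rewrite unitmxE detE unitfE expf_neq0 // gt_eqF // sig_gt0.
have Vinj : forall z : 'cV_(1 - \rank (calC 1 A1 C1)), V *m z = 0 -> z = 0.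
  by move=> z _; apply/matrixP => i j; case: (emp i).
have [h1 h2] := U_inv unit0 hK Vinj.
have GU : GM (calU B1 L1 V).
  apply: (GM_ext (M := fun _ => calU B1 L1 V 0)); last exact: GM_cst.
  by move=> t; rewrite ce.
split; first exact: GM_C1.
exists (fun _ => row_mx (calB 1 A1 B1 L1 0 *m Defs.pinv (calC 1 A1 C1 *m calB 1 A1 B1 L1 0)) V).
split; first by move=> t; rewrite ce /calU /calN; split.
split; first exact: GM_bounded.
split; first exact: GM_bounded (GM_cst _).
exact: GM_bounded_der.
Qed.

Lemma part2 : exists (n m p r : nat) (A : 'M[R]_n) (B : 'M[R]_(n, m)) (C : 'M[R]_(p, n))
     (f : R * 'cV[R]_n * 'cV[R]_m -> 'cV[R]_n) (L : R -> 'M[R]_m),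
     (p <= m)%N /\ f_cont_bdd f /\ P1 p B L /\ P2 r A B C f L /\
         (forall V : 'M[R]_(n, n - \rank (calC r A C)),
            im_eq_ker V (calC r A C) -> Lyapunov_transformation (calU B L V)) /\
       ~ det_cond r A B C L.
Proof.
exists 1%N, 1%N, 1%N, 1%N, A1, B1, C1, f1, L1.
have sig0 : forall t, @sigm R t != 0 by move=> t; rewrite gt_eqF // sig_gt0.
have rk1 : forall t, \rank (L1 t) = 1%N.
  move=> t; apply: mxrank_unit; by rewrite unitmxE /L1 det_scalar1 unitfE.
split => //.
split.
  split; first by move=> x; exact: cst_continuous.
  by exists 0 => x i j; rewrite /f1 mxE normr0.
split.
  split.
    by move=> i j k t; rewrite Lent; exact: sig_smooth.
  split.
    move=> k k1; exists 2 => t i j; rewrite /mxfun_deriven mxE Lent.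
    have s0 := sig_gt0 t; have s1 := sig_le1 t.
    have s2 : sigm t ^+ 2 <= sigm t by rewrite expr2 ler_piMr // ltW.
    have s3 : 0 <= sigm t ^+ 2 by rewrite sqr_ge0.
    case: k k1 => [|[|//]] _.
      by rewrite derive1n0 ger0_norm ?ltW //; lra.
    rewrite derive1n1 sig_d1 ger0_norm; first by lra.
    by rewrite subr_ge0.
  exists 1%N; split => // t; by rewrite /B1 mul1mx.
split.
  split => //; split => // t.
  by rewrite /= expr0 /C1 /B1 !mul1mx.
split; first exact: part2_lyap.
move=> [al [al0 h]].
have := h (ln (al / 2)); rewrite detE.
have e : expR (ln (al / 2)) = al / 2 by rewrite lnK // posrE divr_gt0.
have s0 := sig_gt0 (ln (al / 2)); have s1 := sig_le1 (ln (al / 2)).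
have s2 : sigm (ln (al / 2)) ^+ 2 <= sigm (ln (al / 2)) by rewrite expr2 ler_piMr // ltW.
have s4 := sig_le_exp (ln (al / 2)); rewrite e in s4.
move=> hh; lra.
Qed.

End Part2.


Unset Implicit Arguments.

Theorem lemma2 (R : realType) :
  (forall (n m p r : nat) (A : 'M[R]_n) (B : 'M[R]_(n, m)) (C : 'M[R]_(p, n))
     (f : R * 'cV[R]_n * 'cV[R]_m -> 'cV[R]_n) (L : R -> 'M[R]_m)
     (V : 'M[R]_(n, n - \rank (calC r A C))),
     (p <= m)%N -> f_cont_bdd f -> P1 p B L -> P2 r A B C f L ->
     im_eq_ker V (calC r A C) ->
     det_cond r A B C L ->
     Lyapunov_transformation (calU B L V))
  /\
  (exists (n m p r : nat) (A : 'M[R]_n) (B : 'M[R]_(n, m)) (C : 'M[R]_(p, n))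
     (f : R * 'cV[R]_n * 'cV[R]_m -> 'cV[R]_n) (L : R -> 'M[R]_m),
     (p <= m)%N /\ f_cont_bdd f /\ P1 p B L /\ P2 r A B C f L /\
         (forall V : 'M[R]_(n, n - \rank (calC r A C)),
            im_eq_ker V (calC r A C) -> Lyapunov_transformation (calU B L V)) /\
       ~ det_cond r A B C L).
Proof.
split.
  by move=> n m p r A B C f L V; exact: part1.
exact: part2.
Qed.
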